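(* Fix an integer $s_y\ge 0$. For each integer $t\ge1$ let $A_t$ be the set $I_1\cup I_2\cup I_3\cup T\cup S$ where $Y=[0,s_y]$, $a=4s_y+3$, $I_1=[0,t]\times Y$, $T=[0,(t),at^2-t]\times\{0\}$, $S=[at^2,(t+1),(a+1)t^2-1]\times Y$, $I_2=[2at^2,2at^2+t]\times Y$, $I_3=[(3a+1)t^2,(3a+1)t^2+t]\times Y$. Then $A_t$ is a planar additive basis for $[0,(16s_y+14)t^2-1]\times[0,s_y]$, and its efficiency $c_t=\dfrac{(16s_y+14)t^2(s_y+1)}{|A_t|^2}$ satisfies $$\lim_{t\to\infty}c_t=\frac{2s_y+2}{8s_y+7}.$$
   Context: For integers $a\le b$, $[a,b]$ denotes $\{a,\dots,b\}$. For integers $a\le b$ and $t\ge1$ with $t\mid b-a$, $[a,(t),b]=\{a,a+t,\dots,b\}$. A planar additive basis for $[0,s_x]\times[0,s_y]$ is a set $A$ of points with non-negative integer coordinates with $A+A\supseteq[0,s_x]\times[0,s_y]$ ($A+A$ the vector sumset, summands may coincide); its efficiency is $(s_x+1)(s_y+1)/|A|^2$. *)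

(* Defs.v *)
From Stdlib Require Import Reals.
From mathcomp Require Import all_boot.

Set Implicit Arguments.
Unset Strict Implicit.
Unset Printing Implicit Defensive.

Definition ival (a b : nat) : seq nat := iota a (b.+1 - a).

(* [a,(t),b] = {a, a+t, ..., b}: all a + k t with a + k t <= b *)
Definition sval (a t b : nat) : seq nat :=
  [seq a + t * k | k <- iota 0 ((b - a) %/ t).+1].

Definition prodset (X Y : seq nat) : seq (nat * nat) :=
  [seq (x, y) | x <- X, y <- Y].

Definition card_pts (A : seq (nat * nat)) : nat := size (undup A).

Definition planar_basis (A : seq (nat * nat)) (sx sy : nat) : Prop :=
  forall x y, x <= sx -> y <= sy ->
    exists p q, p \in A /\ q \in A /\ p.1 + q.1 = x /\ p.2 + q.2 = y.

Definition efficiency (A : seq (nat * nat)) (sx sy : nat) : R :=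
  Rdiv (INR ((sx + 1) * (sy + 1))) (pow (INR (card_pts A)) 2).

Definition A_t (sy t : nat) : seq (nat * nat) :=
  let Y := ival 0 sy in
  let a := 4 * sy + 3 in
  let I1 := prodset (ival 0 t) Y in
  let T := prodset (sval 0 t (a * t ^ 2 - t)) [:: 0] in
  let S := prodset (sval (a * t ^ 2) (t + 1) ((a + 1) * t ^ 2 - 1)) Y in
  let I2 := prodset (ival (2 * a * t ^ 2) (2 * a * t ^ 2 + t)) Y in
  let I3 := prodset (ival ((3 * a + 1) * t ^ 2) ((3 * a + 1) * t ^ 2 + t)) Y in
  I1 ++ I2 ++ I3 ++ T ++ S.

(* Main.v *)
Require Import Defs.
From Stdlib Require Import Reals.
From mathcomp Require Import all_boot zify.
From Stdlib Require Import Lra.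
From Coquelicot Require Coquelicot.
Local Notation sval := Defs.sval.

Lemma mem_ival a b x : (x \in ival a b) = (a <= x <= b).
Proof. rewrite /ival mem_iota; apply/idP/idP; lia. Qed.

Lemma mem_sval a t b x : 0 < t -> a <= b ->
  (x \in sval a t b) <-> exists k, x = a + t * k /\ a + t * k <= b.
Proof.
move=> t0 ab; split.
  case/mapP=> k; rewrite mem_iota add0n ltnS leq_divRL // => hk ->.
  exists k; split => //; lia.
case=> k [-> hk]; apply/mapP; exists k => //.
rewrite mem_iota add0n ltnS leq_divRL //; lia.
Qed.

Lemma mem_prodset X Y p : (p \in prodset X Y) = (p.1 \in X) && (p.2 \in Y).
Proof.
case: p => x y; apply/allpairsP/andP => /=.
  by case=> [[u v]] /= [hu hv [-> ->]].
by case=> hx hy; exists (x, y).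
Qed.

Lemma edivE m d : 0 < d -> exists q r, m = q * d + r /\ r < d.
Proof. move=> d0; exists (m %/ d), (m %% d); split; [exact: divn_eq | exact: ltn_pmod]. Qed.


Lemma uniq5 (T : eqType) (X1 X2 X3 X4 X5 : seq T) :
  uniq X1 -> uniq X2 -> uniq X3 -> uniq X4 -> uniq X5 ->
  ~~ has (mem X1) X2 -> ~~ has (mem X1) X3 -> ~~ has (mem X1) X4 -> ~~ has (mem X1) X5 ->
  ~~ has (mem X2) X3 -> ~~ has (mem X2) X4 -> ~~ has (mem X2) X5 ->
  ~~ has (mem X3) X4 -> ~~ has (mem X3) X5 -> ~~ has (mem X4) X5 ->
  uniq (X1 ++ X2 ++ X3 ++ X4 ++ X5).
Proof.
move=> u1 u2 u3 u4 u5 d12 d13 d14 d15 d23 d24 d25 d34 d35 d45.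
by rewrite !cat_uniq !has_cat !negb_or u1 u2 u3 u4 u5 d12 d13 d14 d15 d23 d24 d25 d34 d35 d45.
Qed.

Section Basis.
Variables (s t : nat).
Hypothesis t1 : 1 <= t.
Let a := 4 * s + 3.

Lemma A_memE p : p \in A_t s t =
  [|| (p.1 \in ival 0 t) && (p.2 \in ival 0 s),
      (p.1 \in ival (2 * a * t ^ 2) (2 * a * t ^ 2 + t)) && (p.2 \in ival 0 s),
      (p.1 \in ival ((3 * a + 1) * t ^ 2) ((3 * a + 1) * t ^ 2 + t)) && (p.2 \in ival 0 s),
      (p.1 \in sval 0 t (a * t ^ 2 - t)) && (p.2 \in [:: 0]) |
      (p.1 \in sval (a * t ^ 2) (t + 1) ((a + 1) * t ^ 2 - 1)) && (p.2 \in ival 0 s)].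
Proof.
have -> : A_t s t = prodset (ival 0 t) (ival 0 s) ++
  prodset (ival (2 * a * t ^ 2) (2 * a * t ^ 2 + t)) (ival 0 s) ++
  prodset (ival ((3 * a + 1) * t ^ 2) ((3 * a + 1) * t ^ 2 + t)) (ival 0 s) ++
  prodset (sval 0 t (a * t ^ 2 - t)) [:: 0] ++
  prodset (sval (a * t ^ 2) (t + 1) ((a + 1) * t ^ 2 - 1)) (ival 0 s) by [].
by rewrite mem_cat mem_prodset mem_cat mem_prodset mem_cat mem_prodset mem_cat !mem_prodset.
Qed.

Lemma inI1 x y : x <= t -> y <= s -> (x, y) \in A_t s t.
Proof. move=> hx hy; rewrite A_memE /= !mem_ival; apply/orP; left; lia. Qed.

Lemma inI2 x y : x <= t -> y <= s -> (2 * a * t ^ 2 + x, y) \in A_t s t.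
Proof. move=> hx hy; rewrite A_memE /= !mem_ival.
apply/orP; right; apply/orP; left; lia. Qed.

Lemma inI3 x y : x <= t -> y <= s -> ((3 * a + 1) * t ^ 2 + x, y) \in A_t s t.
Proof. move=> hx hy; rewrite A_memE /= !mem_ival.
apply/orP; right; apply/orP; right; apply/orP; left; lia. Qed.

Lemma inT k : t * k <= a * t ^ 2 - t -> (t * k, 0) \in A_t s t.
Proof.
move=> hk; rewrite A_memE /=.
have -> : (t * k \in sval 0 t (a * t ^ 2 - t)) = true.
  apply/idP/mem_sval => //.
  by exists k.
by rewrite mem_seq1 eqxx /= !orbT.
Qed.

Lemma inS k y : k < t -> y <= s -> (a * t ^ 2 + (t + 1) * k, y) \in A_t s t.
Proof.
move=> hk hy; rewrite A_memE /= mem_ival.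
have -> : (a * t ^ 2 + (t + 1) * k \in sval (a * t ^ 2) (t + 1) ((a + 1) * t ^ 2 - 1)) = true.
  apply/idP/mem_sval; [by rewrite addn1 | nia | exists k; split => //; nia].
rewrite mem_ival; have -> : (0 <= y <= s) = true by lia.
by rewrite /= !orbT.
Qed.


Lemma helpT b x y : (forall r y, r <= t -> y <= s -> (b + r, y) \in A_t s t) ->
  b <= x < b + a * t ^ 2 -> y <= s ->
  exists p q, p \in A_t s t /\ q \in A_t s t /\ p.1 + q.1 = x /\ p.2 + q.2 = y.
Proof.
move=> hb hx hy; have [q [r [e hr]]] := edivE (x - b) t t1.
have hq : q < a * t by nia.
exists (b + r, y), (t * q, 0); split; [apply: hb; lia|split; [apply: inT; nia|]].
simpl; split; lia.
Qed.

Lemma helpS b x y : (forall r, r <= t -> (b + r, 0) \in A_t s t) ->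
  b + a * t ^ 2 <= x < b + a * t ^ 2 + t * (t + 1) -> y <= s ->
  exists p q, p \in A_t s t /\ q \in A_t s t /\ p.1 + q.1 = x /\ p.2 + q.2 = y.
Proof.
move=> hb hx hy.
have [k [r [e hr]]] := edivE (x - b - a * t ^ 2) t.+1 (ltn0Sn t).
have hk : k < t by nia.
exists (a * t ^ 2 + (t + 1) * k, y), (b + r, 0); split; [apply: inS => //|split; [apply: hb; lia|]].
simpl; split; lia.
Qed.

Lemma helpC x y : a * t ^ 2 + t * (t + 1) <= x < 2 * a * t ^ 2 -> y <= s ->
  exists p q, p \in A_t s t /\ q \in A_t s t /\ p.1 + q.1 = x /\ p.2 + q.2 = y.
Proof.
move=> hx hy; have [q [r [e hr]]] := edivE (x - a * t ^ 2) t t1.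
have hq : q < a * t by nia.
have hrq : t < q by nia.
have [j ej] : exists j, q = r + j by exists (q - r); lia.
subst q.
exists (a * t ^ 2 + (t + 1) * r, y), (t * j, 0); split; [apply: inS => //|split; [apply: inT; nia|]].
simpl; split; nia.
Qed.

Lemma basis : planar_basis (A_t s t) ((16 * s + 14) * t ^ 2 - 1) s.
Proof.
move=> x y hx hy.
have E : 16 * s + 14 = 4 * a + 2 by rewrite /a; lia.
rewrite E in hx.
case: (ltnP x (a * t ^ 2)) => h1.
  apply: (@helpT 0); [move=> r y' *; rewrite add0n; exact: inI1|lia|done].
case: (ltnP x (a * t ^ 2 + t * (t + 1))) => h2.
  apply: (@helpS 0); [move=> r *; rewrite add0n; exact: inI1|lia|done].
case: (ltnP x (2 * a * t ^ 2)) => h3.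
  apply: helpC; [lia|done].
case: (ltnP x (3 * a * t ^ 2)) => h4.
  apply: (@helpT (2 * a * t ^ 2)); [move=> r y' *; exact: inI2|lia|done].
case: (ltnP x ((3 * a + 1) * t ^ 2)) => h5.
  apply: (@helpS (2 * a * t ^ 2)); [move=> r *; exact: inI2|nia|done].
case: (ltnP x ((4 * a + 1) * t ^ 2)) => h6.
  apply: (@helpT ((3 * a + 1) * t ^ 2)); [move=> r y' *; exact: inI3|lia|done].
apply: (@helpS ((3 * a + 1) * t ^ 2)); [move=> r *; exact: inI3|nia|done].
Qed.

Definition Bt := prodset (ival 0 t) (ival 0 s) ++
  prodset (ival (2 * a * t ^ 2) (2 * a * t ^ 2 + t)) (ival 0 s) ++
  prodset (ival ((3 * a + 1) * t ^ 2) ((3 * a + 1) * t ^ 2 + t)) (ival 0 s) ++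
  prodset (sval (2 * t) t (a * t ^ 2 - t)) [:: 0] ++
  prodset (sval (a * t ^ 2) (t + 1) ((a + 1) * t ^ 2 - 1)) (ival 0 s).

Lemma Tsplit x : (x \in sval 0 t (a * t ^ 2 - t)) =
  [|| x == 0, x == t | x \in sval (2 * t) t (a * t ^ 2 - t)].
Proof.
have h1 : 0 <= a * t ^ 2 - t by [].
have h2 : 2 * t <= a * t ^ 2 - t by rewrite /a; nia.
apply/idP/idP.
  case/(mem_sval _ _ _ _ t1 h1) => k [-> hk].
  case: k hk => [|[|k]] hk; first by rewrite muln0 eqxx.
    by rewrite muln1 eqxx orbT.
  apply/orP; right; apply/orP; right; apply/(mem_sval _ _ _ _ t1 h2).
  exists k; split; nia.
case/or3P => [/eqP ->|/eqP ->|].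
- apply/(mem_sval _ _ _ _ t1 h1); exists 0; split; nia.
- apply/(mem_sval _ _ _ _ t1 h1); exists 1; split; nia.
case/(mem_sval _ _ _ _ t1 h2) => k [-> hk].
apply/(mem_sval _ _ _ _ t1 h1); exists k.+2; split; nia.
Qed.

Lemma memB p : (p \in A_t s t) = (p \in Bt).
Proof.
rewrite A_memE /Bt.
rewrite mem_cat mem_prodset mem_cat mem_prodset mem_cat mem_prodset mem_cat !mem_prodset.
rewrite Tsplit !mem_ival mem_seq1.
case: p => x y /=.
case: (x \in sval (2 * t) t _); case: (x \in sval (a * t ^ 2) _ _);
  apply/idP/idP; lia.
Qed.

Lemma disj (X Y : seq (nat * nat)) lx hx ly hy :
  (forall p, p \in X -> lx <= p.1 <= hx) -> (forall p, p \in Y -> ly <= p.1 <= hy) ->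
  hx < ly \/ hy < lx -> ~~ has (mem X) Y.
Proof.
move=> hX hY h; apply/hasPn => p pY; apply/negP => pX.
have := hX p pX; have := hY p pY; lia.
Qed.

Lemma rng_ival l h (Y : seq nat) p : p \in prodset (ival l h) Y -> l <= p.1 <= h.
Proof. by rewrite mem_prodset mem_ival => /andP []. Qed.

Lemma rng_sval l d h (Y : seq nat) : 0 < d -> l <= h ->
  forall p, p \in prodset (sval l d h) Y -> l <= p.1 <= h.
Proof.
move=> d0 lh p; rewrite mem_prodset => /andP [/(mem_sval _ _ _ _ d0 lh) [k [-> hk]] _].
lia.
Qed.

Lemma uniq_prodset (X Y : seq nat) : uniq X -> uniq Y -> uniq (prodset X Y).
Proof.
move=> uX uY; apply: allpairs_uniq => //.
by move=> [? ?] [? ?] _ _ /= [-> ->].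
Qed.

Lemma uniq_sval l d h : 0 < d -> uniq (sval l d h).
Proof.
move=> d0; rewrite map_inj_uniq ?iota_uniq // => k1 k2 e.
apply/eqP; rewrite -(eqn_pmul2l d0); apply/eqP; lia.
Qed.

Lemma uniqB : uniq Bt.
Proof.
have h2 : 2 * t <= a * t ^ 2 - t by rewrite /a; nia.
have h3 : a * t ^ 2 <= (a + 1) * t ^ 2 - 1 by nia.
have t0 : 0 < t + 1 by rewrite addn1.
apply: uniq5. all: try (apply: uniq_prodset; first [exact: iota_uniq | exact: uniq_sval | done]).
all: apply: disj; [ first [exact: rng_ival | exact: (rng_sval _ _ _ _ t1 h2) | exact: (rng_sval _ _ _ _ t0 h3)]
  | first [exact: rng_ival | exact: (rng_sval _ _ _ _ t1 h2) | exact: (rng_sval _ _ _ _ t0 h3)]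
  | rewrite /a; nia ].
Qed.


Lemma size5 (T : Type) (X1 X2 X3 X4 X5 : seq T) :
  size (X1 ++ X2 ++ X3 ++ X4 ++ X5) = size X1 + size X2 + size X3 + size X4 + size X5.
Proof. by rewrite !size_cat !addnA. Qed.
Lemma size_prodset X Y : size (prodset X Y) = size X * size Y.
Proof. exact: size_allpairs. Qed.
Lemma size_ival l h : size (ival l h) = h.+1 - l.
Proof. by rewrite /ival size_iota. Qed.
Lemma size_sval l d h : size (sval l d h) = ((h - l) %/ d).+1.
Proof. by rewrite /Defs.sval size_map size_iota. Qed.

Lemma sizeB : size Bt = t * (8 * s + 7) + 3 * s + 1.
Proof.
rewrite /Bt size5 !size_prodset !size_sval !size_ival /=.
have e0 : a * t ^ 2 = (a * t) * t by rewrite -mulnn mulnA.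
rewrite (_ : a * t ^ 2 - t - 2 * t = (a * t - 3) * t); last by rewrite e0 mulnBl; lia.
rewrite (_ : (a + 1) * t ^ 2 - 1 - a * t ^ 2 = (t - 1) * (t + 1)); last first.
  rewrite mulnDl mul1n mulnBl mulnDr !muln1 mul1n -mulnn; lia.
rewrite !mulnK ?addn1 //.
have h3 : 3 <= a * t by rewrite /a; nia.
rewrite !subn0 -!addnS !addKn.
have -> : (t - 1).+1 = t by lia.
move: h3; rewrite /a !mulnDl !mulnDr; lia.
Qed.

Lemma cardA : card_pts (A_t s t) = t * (8 * s + 7) + 3 * s + 1.
Proof.
rewrite /card_pts -sizeB; apply: perm_size; apply: uniq_perm.
- exact: undup_uniq.
- exact: uniqB.
- by move=> p; rewrite mem_undup memB.
Qed.

End Basis.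

Module Lim.
Import Coquelicot.Coquelicot.
Lemma limpart (s : nat)
  (card : forall t, (1 <= t)%N -> card_pts (A_t s t) = (t * (8 * s + 7) + 3 * s + 1)%N) :
  Un_cv (fun n : nat =>
           efficiency (A_t s n.+1) ((16 * s + 14) * n.+1 ^ 2 - 1) s)
        (Rdiv (INR (2 * s + 2)) (INR (8 * s + 7))).
Proof.
apply is_lim_seq_Reals.
set C := INR (8 * s + 7). set D := INR (3 * s + 1).
have hv : is_lim_seq (fun n => / INR n.+1) 0.
  have := is_lim_seq_inv _ _ is_lim_seq_INR ltac:(discriminate).
  by move/is_lim_seq_incr_1.
have Cpos : 0 < C.
  rewrite /C -plusE -multE plus_INR mult_INR; have := pos_INR s.
  simpl INR; lra.
have Spos := pos_INR s.
have hg : is_lim_seq (fun n => (2 * C * (INR s + 1)) / ((C + D * / INR n.+1) * (C + D * / INR n.+1)))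
   ((2 * C * (INR s + 1)) / ((C + D * 0) * (C + D * 0))).
  apply: is_lim_seq_div'; first exact: is_lim_seq_const.
  - apply: is_lim_seq_mult'; apply: is_lim_seq_plus'; try exact: is_lim_seq_const;
    apply: is_lim_seq_mult'; try exact: is_lim_seq_const; exact: hv.
  - rewrite Rmult_0_r Rplus_0_r; nra.
have -> : Rdiv (INR (2 * s + 2)) (INR (8 * s + 7)) =
   ((2 * C * (INR s + 1)) / ((C + D * 0) * (C + D * 0))).
  rewrite /C -plusE -multE !(plus_INR, mult_INR); simpl INR. rewrite /D; clear hg hv Cpos card. field.
  have := pos_INR s; lra.
apply: is_lim_seq_ext hg => n.
rewrite /efficiency card // subnK; last first.
  rewrite muln_gt0 expn_gt0 /=; lia.
rewrite /C /D.
rewrite -mulnn.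
rewrite -!plusE -!multE !(plus_INR, mult_INR, S_INR).
have hn := pos_INR n.
have hi : 0 < / (INR n + 1) by apply: Rinv_0_lt_compat; lra.
simpl INR.
field; repeat split; nra.
Qed.

End Lim.

Theorem mainTheorem14 (sy : nat) :
  (forall t : nat, 1 <= t ->
     planar_basis (A_t sy t) ((16 * sy + 14) * t ^ 2 - 1) sy) /\
  Un_cv (fun n : nat =>
           efficiency (A_t sy n.+1) ((16 * sy + 14) * n.+1 ^ 2 - 1) sy)
        (Rdiv (INR (2 * sy + 2)) (INR (8 * sy + 7))).
Proof.
split.
  by move=> t t1; exact: basis.
apply: Lim.limpart => t t1; exact: cardA.
Qed.
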